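(* Let $(N_m)_{m\ge 0}$ be positive integers with $N_0=N$, and for each $m\ge1$ let $W_m:\mathbb{R}^{N_{m-1}}\to\mathbb{C}^{N_m}$ be linear with $W_m^*W_m=\mathrm{Id}$. Let $X$ be a random vector in $\mathbb{R}^N$ with $E(\|X\|^2)<\infty$ and let $(X_m)_{m\ge0}$ be its expected scattering layers. Then for every $M>0$, $$\lim_{m\to\infty}E\big(\|X_m\|\,\mathbf{1}_{\|X\|\le M}\big)=0.$$
   Context: For $z\in\mathbb{C}^n$, $|z|$ denotes the vector of coordinatewise complex moduli; $\|\cdot\|$ is the Euclidean norm. Expected scattering layers: $X_0=X$ and $X_{m+1}=|W_{m+1}(X_m-E(X_m))|\in\mathbb{R}^{N_{m+1}}$ for $m\ge0$. *)

(* Defs.v *)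
From HB Require Import structures.
From mathcomp Require Import all_boot all_order all_algebra.
From mathcomp Require Import all_classical all_reals all_analysis.
Set Implicit Arguments. Unset Strict Implicit. Unset Printing Implicit Defensive.
Import Order.TTheory GRing.Theory Num.Theory.
Local Open Scope ring_scope.

Definition vnorm {R : realType} {n : nat} (v : 'cV[R]_n) : R :=
  Num.sqrt (\sum_(i < n) v i 0 ^+ 2).

(* A linear map W : R^n -> C^m is represented by its real and imaginary
   parts: W v = A v + i B v, with A B : 'M_(m, n).  With respect to the
   real inner product Re<u,v> on C^m, W^* u = A^T Re u + B^T Im u, so
   W^* W = A^T A + B^T B. *)
Definition isometry_cplx {R : realType} {m n : nat} (A B : 'M[R]_(m, n)) : Prop :=
  A^T *m A + B^T *m B = 1%:M.

Definition cmod_vec {R : realType} {m n : nat} (A B : 'M[R]_(m, n))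
  (v : 'cV[R]_n) : 'cV[R]_m :=
  \col_j Num.sqrt ((A *m v) j 0 ^+ 2 + (B *m v) j 0 ^+ 2).

Definition Evec {d} {T : measurableType d} {R : realType} (P : probability T R)
  {n : nat} (f : T -> 'cV[R]_n) : 'cV[R]_n :=
  \col_i fine (expectation P (fun w => f w i 0)).

(* Expected scattering layers: layer 0 = X,
   layer (m+1) = |W_{m+1} (layer m - E(layer m))|, where W_{m+1} = (A m, B m). *)
Fixpoint layer {d} {T : measurableType d} {R : realType} (P : probability T R)
  (N : nat -> nat) (A B : forall m, 'M[R]_(N m.+1, N m))
  (X : T -> 'cV[R]_(N 0)) (m : nat) : T -> 'cV[R]_(N m) :=
  match m return T -> 'cV[R]_(N m) with
  | 0 => X
  | k.+1 => fun w =>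
      cmod_vec (A k) (B k) (layer P A B X k w - Evec P (layer P A B X k))
  end.

(* Main.v *)
Set Warnings "-all".
Require Import Defs.
From HB Require Import structures.
From mathcomp Require Import all_boot all_order all_algebra.
From mathcomp Require Import all_classical all_reals all_analysis.
From mathcomp Require Import ring lra.
From mathcomp Require Import measurable_realfun.
Import Order.TTheory GRing.Theory Num.Theory.
Import numFieldNormedType.Exports.
Local Open Scope ring_scope.
Local Open Scope classical_set_scope.

Section vec.
Context {R : realType}.

Definition sqn {n} (v : 'cV[R]_n) : R := \sum_(i < n) v i 0 ^+ 2.
Definition dotv {n} (u v : 'cV[R]_n) : R := \sum_(i < n) u i 0 * v i 0.

Lemma sqn_ge0 n (v : 'cV[R]_n) : 0 <= sqn v.
Proof. by apply: sumr_ge0 => i _; exact: sqr_ge0. Qed.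

Lemma vnorm_sq n (v : 'cV[R]_n) : vnorm v ^+ 2 = sqn v.
Proof. by rewrite /vnorm sqr_sqrtr // sqn_ge0. Qed.

Lemma vnorm_ge0 n (v : 'cV[R]_n) : 0 <= vnorm v.
Proof. exact: sqrtr_ge0. Qed.

Lemma sqn_mx n (v : 'cV[R]_n) : sqn v = (v^T *m v) 0 0.
Proof. by rewrite /sqn !mxE; apply: eq_bigr => i _; rewrite !mxE expr2. Qed.

Lemma sqn_cmod m n (A B : 'M[R]_(m, n)) v : isometry_cplx A B ->
  sqn (cmod_vec A B v) = sqn v.
Proof.
move=> iso; rewrite {1}/sqn.
under eq_bigr => j _ do rewrite mxE sqr_sqrtr ?addr_ge0 ?sqr_ge0 //.
rewrite big_split /=.
have -> : \sum_(i < m) (A *m v) i 0 ^+ 2 = sqn (A *m v) by [].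
have -> : \sum_(i < m) (B *m v) i 0 ^+ 2 = sqn (B *m v) by [].
rewrite !sqn_mx.
have -> : (A *m v)^T *m (A *m v) = v^T *m ((A^T *m A) *m v).
  by rewrite trmx_mul !mulmxA.
have -> : (B *m v)^T *m (B *m v) = v^T *m ((B^T *m B) *m v).
  by rewrite trmx_mul !mulmxA.
have <- : (v^T *m (A^T *m A *m v) + v^T *m (B^T *m B *m v)) 0 0 = (v^T *m (A^T *m A *m v)) 0 0 + (v^T *m (B^T *m B *m v)) 0 0 by rewrite mxE.
by rewrite -mulmxDr -mulmxDl iso mul1mx.
Qed.

Lemma cmod_ge0 m n (A B : 'M[R]_(m, n)) v j : 0 <= cmod_vec A B v j 0.
Proof. by rewrite mxE sqrtr_ge0. Qed.

Lemma sqrt_lip (a b c e : R) :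
  (Num.sqrt (a ^+ 2 + b ^+ 2) - Num.sqrt (c ^+ 2 + e ^+ 2)) ^+ 2
   <= (a - c) ^+ 2 + (b - e) ^+ 2.
Proof.
have hx : 0 <= a ^+ 2 + b ^+ 2 by rewrite addr_ge0 ?sqr_ge0.
have hy : 0 <= c ^+ 2 + e ^+ 2 by rewrite addr_ge0 ?sqr_ge0.
have key : a * c + b * e <= Num.sqrt (a ^+ 2 + b ^+ 2) * Num.sqrt (c ^+ 2 + e ^+ 2).
  rewrite -sqrtrM //.
  apply: (le_trans (ler_norm _)).
  rewrite -sqrtr_sqr; apply: ler_wsqrtr.
  have : 0 <= (a * e - b * c) ^+ 2 by exact: sqr_ge0.
  by move=> h; nra.
rewrite sqrrB !sqr_sqrtr //.
nra.
Qed.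

Lemma mxBE m n (M1 M2 : 'M[R]_(m, n)) i j : (M1 - M2) i j = M1 i j - M2 i j.
Proof. by rewrite !mxE. Qed.

Lemma cmodE m n (A B : 'M[R]_(m, n)) v j :
  cmod_vec A B v j 0 = Num.sqrt ((A *m v) j 0 ^+ 2 + (B *m v) j 0 ^+ 2).
Proof. by rewrite /cmod_vec; exact: mxE. Qed.

Lemma sqn_cmod_lip m n (A B : 'M[R]_(m, n)) u v : isometry_cplx A B ->
  sqn (cmod_vec A B u - cmod_vec A B v) <= sqn (u - v).
Proof.
move=> iso; rewrite -(@sqn_cmod _ _ A B (u - v) iso) /sqn.
apply: ler_sum => j _.
rewrite mxBE !cmodE sqr_sqrtr ?addr_ge0 ?sqr_ge0 //.
rewrite !mulmxBr !mxBE.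
exact: sqrt_lip.
Qed.

Lemma sqnB n (u v : 'cV[R]_n) : sqn (u - v) = sqn u - 2 * dotv u v + sqn v.
Proof.
rewrite /sqn /dotv mulr_sumr -sumrB -big_split /=.
by apply: eq_bigr => i _; rewrite !mxE; ring.
Qed.

Lemma dotv_ge0 n (u v : 'cV[R]_n) : (forall i, 0 <= u i 0) -> (forall i, 0 <= v i 0) ->
  0 <= dotv u v.
Proof. by move=> hu hv; apply: sumr_ge0 => i _; rewrite mulr_ge0. Qed.

End vec.
Set Implicit Arguments.

Section integ.
Context d (T : measurableType d) (R : realType) (P : probability T R).

Definition Int (f : T -> R) := P.-integrable setT (EFin \o f).
Definition mf (f : T -> R) := measurable_fun setT f.
Local Notation E f := (Rintegral P setT f).

Lemma Int_mf f : Int f -> mf f.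
Proof. by move=> /integrableP[/measurable_realfun.measurable_EFinP]. Qed.

Lemma Int_cst c : Int (fun=> c).
Proof. exact: finite_measure_integrable_cst. Qed.

Lemma IntD f g : Int f -> Int g -> Int (fun w => f w + g w).
Proof. by move=> hf hg; apply: (eq_integrable measurableT _ _ _ (integrableD measurableT hf hg)). Qed.

Lemma IntN f : Int f -> Int (fun w => - f w).
Proof. by move=> hf; apply: (eq_integrable measurableT _ _ _ (integrableN hf)). Qed.

Lemma IntB f g : Int f -> Int g -> Int (fun w => f w - g w).
Proof. by move=> hf hg; apply: IntD => //; exact: IntN. Qed.

Lemma IntZ c f : Int f -> Int (fun w => c * f w).
Proof.
by move=> hf; apply: (eq_integrable measurableT _ _ _ (integrableZl measurableT c hf)) => x _ /=; rewrite EFinM.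
Qed.

Lemma Int_sum (I : eqType) (s : seq I) (F : I -> T -> R) : (forall i, Int (F i)) ->
  Int (fun w => \sum_(i <- s) F i w).
Proof.
move=> hF; elim: s => [|i s IH].
  by apply: (eq_integrable measurableT _ _ _ (Int_cst 0)) => x _; rewrite /= big_nil.
have h := IntD (hF i) IH.
refine (eq_integrable measurableT _ _ _ h).
by move=> x _; rewrite /= big_cons.
Qed.

Lemma Int_le f g : mf f -> (forall w, `|f w| <= g w) -> Int g -> Int f.
Proof.
move=> hf hfg hg; apply: (le_integrable measurableT _ _ hg) => //; first exact/measurable_realfun.measurable_EFinP.
move=> x _ /=; rewrite lee_fin (le_trans (hfg x)) //.
exact: real_ler_norm (ger0_real (le_trans (normr_ge0 _) (hfg x))).
Qed.

Lemma E_D f g : Int f -> Int g -> E (fun w => f w + g w) = E f + E g.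
Proof. by move=> hf hg; rewrite RintegralD. Qed.

Lemma E_B f g : Int f -> Int g -> E (fun w => f w - g w) = E f - E g.
Proof. by move=> hf hg; rewrite RintegralB. Qed.

Lemma E_Z c f : Int f -> E (fun w => c * f w) = c * E f.
Proof. by move=> hf; rewrite RintegralZl. Qed.

Lemma E_cst c : E (fun=> c) = c.
Proof.
rewrite Rintegral_cst //.
have h := @probability_setT _ _ _ P.
have -> : fine (P [set: T]) = 1.
  by rewrite -[RHS]/(fine 1%E); congr fine; exact: h.
by rewrite mulr1.
Qed.

Lemma E_sum (I : eqType) (s : seq I) (F : I -> T -> R) : (forall i, Int (F i)) ->
  E (fun w => \sum_(i <- s) F i w) = \sum_(i <- s) E (F i).
Proof.
move=> hF; elim: s => [|i s IH].
  by under eq_Rintegral do rewrite big_nil; rewrite E_cst big_nil.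
under eq_Rintegral do rewrite big_cons.
by rewrite E_D ?big_cons ?IH //; exact: Int_sum.
Qed.

Lemma E_le f g : Int f -> Int g -> (forall w, f w <= g w) -> E f <= E g.
Proof. by move=> hf hg hfg; apply: le_Rintegral. Qed.

Lemma E_ge0 f : (forall w, 0 <= f w) -> 0 <= E f.
Proof. by move=> h; apply: Rintegral_ge0. Qed.

Lemma expectationE f : Int f -> expectation P f = (E f)%:E.
Proof.
move=> hf; rewrite expectation.unlock /Rintegral fineK //.
exact: (integrable_fin_num _ hf).
Qed.

End integ.
Arguments mf {d T R} f.

Section layers.
Context d (T : measurableType d) (R : realType) (P : probability T R).
Local Notation E f := (Rintegral P setT f).
Local Notation Int := (@Int d T R P).

Definition good n (Z : T -> 'cV[R]_n) :=
  (forall i, mf (fun w => Z w i 0)) /\ Int (fun w => sqn (Z w)).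

Lemma mf_sqn n (Z : T -> 'cV[R]_n) : (forall i, mf (fun w => Z w i 0)) ->
  mf (fun w => sqn (Z w)).
Proof.
move=> h; rewrite /sqn; apply: measurable_sum => i.
by apply: measurable_funX; exact: h.
Qed.

Lemma coord_le_sqn n (v : 'cV[R]_n) i : `|v i 0| <= 1 + sqn v.
Proof.
have h1 : v i 0 ^+ 2 <= sqn v.
  rewrite /sqn (bigD1 i) //= lerDl; apply: sumr_ge0 => j _; exact: sqr_ge0.
have h2 : `|v i 0| <= 1 + v i 0 ^+ 2.
  have hy : 0 <= `|v i 0| by [].
  rewrite -real_normK ?num_real //.
  have := sqr_ge0 (`|v i 0| - 1); rewrite sqrrB mulr1 expr1n => h.
  lra.
by apply: (le_trans h2); rewrite lerD2l.
Qed.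

Lemma good_coord n (Z : T -> 'cV[R]_n) i : good Z -> Int (fun w => Z w i 0).
Proof.
move=> [hm hi]; apply: Int_le (hm i) _ (IntD (Int_cst P 1) hi).
by move=> w; exact: coord_le_sqn.
Qed.

Lemma Int_dot n (Z : T -> 'cV[R]_n) c : good Z -> Int (fun w => dotv (Z w) c).
Proof.
move=> hZ; rewrite /dotv; apply: Int_sum => i.
apply: (eq_integrable measurableT _ _ _ (IntZ (c i 0) (good_coord i hZ))).
by move=> x _ /=; rewrite mulrC.
Qed.

Lemma EvecE n (Z : T -> 'cV[R]_n) i : Evec P Z i 0 = E (fun w => Z w i 0).
Proof. by rewrite mxE expectation.unlock. Qed.

Lemma E_dot n (Z : T -> 'cV[R]_n) c : good Z ->
  E (fun w => dotv (Z w) c) = dotv (Evec P Z) c.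
Proof.
move=> hZ; rewrite /dotv E_sum; last first.
  move=> i; apply: (eq_integrable measurableT _ _ _ (IntZ (c i 0) (good_coord i hZ))).
  by move=> x _ /=; rewrite mulrC.
apply: eq_bigr => i _; rewrite EvecE.
under eq_Rintegral do rewrite mulrC.
by rewrite E_Z; [rewrite mulrC|exact: good_coord].
Qed.

Lemma dotvv n (v : 'cV[R]_n) : dotv v v = sqn v.
Proof. by apply: eq_bigr => i _; rewrite expr2. Qed.

Lemma dotvC n (u v : 'cV[R]_n) : dotv u v = dotv v u.
Proof. by apply: eq_bigr => i _; rewrite mulrC. Qed.

Lemma good_step m n (A' B' : 'M[R]_(m, n)) (Z : T -> 'cV[R]_n) :
  isometry_cplx A' B' -> good Z ->
  good (fun w => cmod_vec A' B' (Z w - Evec P Z)) /\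
  E (fun w => sqn (cmod_vec A' B' (Z w - Evec P Z))) =
  E (fun w => sqn (Z w)) - sqn (Evec P Z).
Proof.
move=> iso hZ; set mu := Evec P Z.
have hs : forall w, sqn (cmod_vec A' B' (Z w - mu)) =
    sqn (Z w) - 2 * dotv (Z w) mu + sqn mu.
  by move=> w; rewrite sqn_cmod // sqnB.
have hI1 : Int (fun w => sqn (Z w) - 2 * dotv (Z w) mu).
  by apply: IntB; [case: hZ|apply: IntZ; exact: Int_dot].
have hI : Int (fun w => sqn (Z w) - 2 * dotv (Z w) mu + sqn mu).
  by apply: IntD => //; exact: Int_cst.
split; first split.
- move=> j; under eq_fun do rewrite cmodE.
  apply: (measurableT_comp (continuous_measurable_fun (@sqrt_continuous R))).
  apply: measurable_funD; apply: measurable_funX;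
  (under eq_fun do rewrite mxE); apply: measurable_sum => i;
  (under eq_fun do rewrite mxBE); apply: measurable_funM;
  try exact: measurable_cst;
  (apply: measurable_funB; [case: hZ => + _; exact|exact: measurable_cst]).
- by apply: (eq_integrable measurableT _ _ _ hI) => w _ /=; rewrite hs.
- under eq_Rintegral do rewrite hs.
  rewrite E_D ?E_B ?E_Z ?E_cst ?E_dot ?dotvv //; try exact: Int_cst.
  + by ring.
  + exact: Int_dot.
  + by case: hZ.
  + by apply: IntZ; exact: Int_dot.
Qed.

End layers.

Section main.
Context d (T : measurableType d) (R : realType) (P : probability T R) (N : nat -> nat)
  (A B : forall m, 'M[R]_(N m.+1, N m)) (X : T -> 'cV[R]_(N 0)).
Context (iso : forall m, isometry_cplx (A m) (B m))
  (hXm : forall i, mf (fun w => X w i 0)) (hXI : Int P (fun w => sqn (X w))).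
Local Notation E f := (Rintegral P setT f).
Local Notation L := (layer P A B X).
Local Notation mu m := (Evec P (L m)).

Lemma L_good m : good P (L m).
Proof.
elim: m => [|m IH]; first by split.
exact: (good_step (iso m) IH).1.
Qed.

Lemma e_step m : E (fun w => sqn (L m.+1 w)) = E (fun w => sqn (L m w)) - sqn (mu m).
Proof. exact: (good_step (iso m) (L_good m)).2. Qed.

Lemma e_ge0 m : 0 <= E (fun w => sqn (L m w)).
Proof. by apply: E_ge0 => w; exact: sqn_ge0. Qed.

Lemma L_nn m w j : 0 <= L m.+1 w j 0.
Proof. exact: cmod_ge0. Qed.

Lemma mu_nn m j : 0 <= mu m.+1 j 0.
Proof. by rewrite EvecE; apply: E_ge0 => w; exact: L_nn. Qed.

Lemma L_lip m w w' : sqn (L m w - L m w') <= sqn (X w - X w').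
Proof.
elim: m => [//|m IH] /=.

apply: (le_trans (sqn_cmod_lip _ _ _ _ _ _ (iso m))).
by rewrite opprB addrA subrK.
Qed.


Definition gf (dl : R) m w := Num.max 0 (sqn (L m.+1 w) - dl ^+ 2).

Lemma gf_ge0 dl m w : 0 <= gf dl m w.
Proof. by rewrite /gf le_max lexx. Qed.

Lemma gf_le dl m w : gf dl m w <= sqn (L m.+1 w).
Proof.
rewrite /gf ge_max sqn_ge0 /=.
by rewrite lerBlDr lerDl sqr_ge0.
Qed.

Lemma mf_sqnL m : mf (fun w => sqn (L m w)).
Proof. by apply: mf_sqn; case: (L_good m). Qed.

Lemma mf_gf dl m : mf (gf dl m).
Proof.
apply: measurable_maxr; first exact: measurable_cst.
by apply: measurable_funB; [exact: mf_sqnL|exact: measurable_cst].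
Qed.

Lemma indic01 (C : set T) w : (\1_C w : R) = 0 \/ (\1_C w : R) = 1.
Proof. by rewrite indicE; case: (w \in C); [right|left]. Qed.

Lemma ind1 (C : set T) w : C w -> (\1_C w : R) = 1.
Proof. by move=> h; rewrite indicE mem_set. Qed.

Lemma ind0 (C : set T) w : ~ C w -> (\1_C w : R) = 0.
Proof. by move=> h; rewrite indicE memNset. Qed.

Lemma Int_Cg (C : set T) dl m : measurable C -> Int P (fun w => \1_C w * gf dl m w).
Proof.
move=> mC; apply: (Int_le (g := fun w => sqn (L m.+1 w))).
- by apply: measurable_funM; [exact: measurable_indic|exact: mf_gf].
- move=> w; rewrite normrM.
  have h1 := gf_ge0 dl m w; have h2 := gf_le dl m w.
  by case: (indic01 C w) => ->; rewrite ?normr0 ?mul0r ?sqn_ge0 // normr1 mul1r ger0_norm.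
- by case: (L_good m.+1).
Qed.

Lemma E_indic (C : set T) : measurable C -> E (\1_C) = fine (P C).
Proof. by move=> mC; rewrite /Rintegral integral_indic // setIT. Qed.

Lemma Int_indic (C : set T) : measurable C -> Int P (\1_C).
Proof. by move=> mC; exact: integrable_indic. Qed.

Lemma cell_bound (C : set T) (dl : R) m : measurable C ->
  (forall w w', C w -> C w' -> sqn (X w - X w') <= dl ^+ 2) ->
  fine (P C) * E (fun w => \1_C w * gf dl m w) <= 2 * sqn (mu m.+1).
Proof.
move=> mC hC.
set Y := L m.+1; set g := gf dl m; set p := fine (P C).
have hY : good P Y := L_good m.+1.
have hp : 0 <= p by rewrite /p fine_ge0 // measure_ge0.
have hdot0 : forall w w', 0 <= dotv (Y w) (Y w').
  by move=> w w'; apply: dotv_ge0 => i; exact: L_nn.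
have pw1 : forall w w', C w -> \1_C w' * (g w / 2) <= dotv (Y w') (Y w).
  move=> w w' Cw.
  case: (pselect (C w')) => [Cw'|nCw']; last by rewrite ind0 // mul0r.
  rewrite ind1 // mul1r ler_pdivrMr // /g /gf ge_max; apply/andP; split.
    by rewrite mulr_ge0.
  have := hC _ _ Cw' Cw => /(le_trans (L_lip m.+1 w' w)) h.
  have e := sqnB _ (Y w') (Y w).
  have := sqn_ge0 _ (Y w'); lra.
have pw2 : forall w, \1_C w * (p * (g w / 2)) <= dotv (Y w) (mu m.+1).
  move=> w.
  case: (pselect (C w)) => [Cw|nCw]; last first.
    by rewrite ind0 // mul0r; apply: dotv_ge0 => i; [exact: L_nn|exact: mu_nn].
  rewrite ind1 // mul1r dotvC -E_dot //.
  have -> : p * (g w / 2) = E (fun w' => \1_C w' * (g w / 2)).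
    under eq_Rintegral do rewrite mulrC.
    by rewrite E_Z ?Int_indic // E_indic // mulrC.
  apply: E_le => //; first by apply: (eq_integrable measurableT _ _ _ (IntZ (g w / 2) (@Int_indic C mC))) => x _ /=; rewrite mulrC.
    by apply: (eq_integrable measurableT _ _ _ (Int_dot (Y w) hY)) => x _.
  by move=> w'; exact: pw1.
have key : E (fun w => \1_C w * (p * (g w / 2))) <= E (fun w => dotv (Y w) (mu m.+1)).
  apply: E_le => //; last exact: Int_dot.
  apply: (eq_integrable measurableT _ _ _ (IntZ (p / 2) (Int_Cg C dl m mC))).
  by move=> x _ /=; congr EFin; rewrite /g; ring.
rewrite E_dot // dotvv in key.
have eqI : E (fun w => \1_C w * (p * (g w / 2))) = E (fun w => (p / 2) * (\1_C w * g w)).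
  by apply: eq_Rintegral => x _; ring.
move: key; rewrite eqI; rewrite E_Z; last exact: Int_Cg.
set I := E _ => key.
have : p * I / 2 <= sqn (mu m.+1) by rewrite mulrAC.
lra.
Qed.

Lemma cell_null (C : set T) (dl : R) m : measurable C -> P C = 0%E ->
  E (fun w => \1_C w * gf dl m w) = 0.
Proof.
move=> mC P0; rewrite /Rintegral.
have -> : (\int[P]_(x in setT) ((\1_C x * gf dl m x)%:E))%E =
          (\int[P]_(x in C) (gf dl m x)%:E)%E.
  rewrite [RHS]integral_mkcond; apply: eq_integral => x _.
  by rewrite patchE indicE; case: (x \in C); rewrite ?mul1r ?mul0r.
rewrite null_set_integral //.
apply: (measurable_funS measurableT) => //.
by apply/measurable_EFinP; exact: mf_gf.
Qed.

Lemma vn_le (y dl : R) : 0 <= y -> 0 < dl ->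
  y <= dl + Num.max 0 (y ^+ 2 - dl ^+ 2) / dl.
Proof.
move=> hy hd.
rewrite -(ler_pM2r hd) mulrDl divfK ?gt_eqF //.
have g0 : 0 <= Num.max 0 (y ^+ 2 - dl ^+ 2) by rewrite le_max lexx.
have g1 : y ^+ 2 - dl ^+ 2 <= Num.max 0 (y ^+ 2 - dl ^+ 2) by rewrite le_max lexx orbT.
case: (lerP y dl) => hyd.
- have : y * dl <= dl * dl by rewrite ler_wpM2r // ltW.
  lra.
- have : y * dl <= y * y by rewrite ler_wpM2l // ltW.
  rewrite !expr2 in g1 *; lra.
Qed.

Lemma mu_small (eta : R) : 0 < eta -> \forall m \near \oo, sqn (mu m) <= eta.
Proof.
move=> he.
pose e : nat -> R := fun m => E (fun w => sqn (L m w)).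
have hni : {homo e : n m / (n <= m)%N >-> m <= n}.
  apply/nonincreasing_seqP => n; rewrite /e e_step lerBlDr lerDl; exact: sqn_ge0.
have hlb : has_lbound (range e) by exists 0 => _ [n _ <-]; exact: e_ge0.
have hc := nonincreasing_is_cvgn hni hlb.
have hge := nonincreasing_cvgn_ge hni hc.
have hn := hc; move/cvgrPdist_le : hn => /(_ eta he) hn.
move: (limn e) hge hn => l hge hn.
move: hn; apply: filterS => m hm.
have h1 := hge m.+1; rewrite /e e_step in h1.
have h2 := ler_norm (e m - l).
rewrite distrC in hm.
rewrite /e in h2 hm.
lra.
Qed.

Lemma sum_ge_term (I : eqType) (s : seq I) (F : I -> R) k : k \in s ->
  (forall j, 0 <= F j) -> F k <= \sum_(j <- s) F j.
Proof.
elim: s => // j s IH; rewrite inE big_cons => /orP[/eqP->|ks] h0.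
- by rewrite lerDl; apply: sumr_ge0 => i _; exact: h0.
- by rewrite (le_trans (IH ks h0)) // lerDr.
Qed.

Lemma Int_f (S : set T) m : measurable S ->
  Int P (fun w => vnorm (L m w) * \1_S w).
Proof.
move=> mS; apply: (Int_le (g := fun w => 1 + sqn (L m w))).
- apply: measurable_funM; last exact: measurable_indic.
  apply: (measurableT_comp (continuous_measurable_fun (@sqrt_continuous R))).
  exact: mf_sqnL.
- move=> w; rewrite normrM.
  have hv := vnorm_ge0 _ (L m w); have e := vnorm_sq _ (L m w).
  have h1 : vnorm (L m w) <= 1 + sqn (L m w).
    have := sqr_ge0 (vnorm (L m w) - 1); rewrite sqrrB mulr1 expr1n -e; lra.
  by case: (indic01 S w) => ->; rewrite ?normr0 ?mulr0 ?normr1 ?mulr1 ?ger0_norm //;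
    rewrite addr_ge0 // sqn_ge0.
- apply: IntD; [exact: Int_cst|by case: (L_good m)].
Qed.

Lemma bound_m (S : set T) (I : finType) (Cf : I -> set T) (dl : R) :
  measurable S -> 0 < dl ->
  (forall k, measurable (Cf k)) ->
  (forall k w w', Cf k w -> Cf k w' -> sqn (X w - X w') <= dl ^+ 2) ->
  (forall w, S w -> exists k, Cf k w) ->
  exists Kc, 0 <= Kc /\ forall m,
    E (fun w => vnorm (L m.+1 w) * \1_S w) <= dl + Kc * sqn (mu m.+1).
Proof.
move=> mS hd mC hC hcov.
pose c k := if fine (P (Cf k)) == 0 then 0 else 2 / fine (P (Cf k)).
have c0 : forall k, 0 <= c k.
  move=> k; rewrite /c; case: ifP => // _.
  by rewrite divr_ge0 // fine_ge0 // measure_ge0.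
exists (dl^-1 * \sum_(k <- index_enum I) c k); split.
  apply: mulr_ge0; first by rewrite invr_ge0 ltW.
  by apply: sumr_ge0 => k _; exact: c0.
move=> m.
set g := gf dl m.
have hIC : forall k, Int P (fun w => \1_(Cf k) w * g w) by move=> k; exact: Int_Cg.
have hIsum : Int P (fun w => \sum_(k <- index_enum I) \1_(Cf k) w * g w).
  by apply: Int_sum => k; exact: hIC.
have hIs : Int P (fun w => dl + dl^-1 * \sum_(k <- index_enum I) \1_(Cf k) w * g w).
  by apply: IntD; [exact: Int_cst|apply: IntZ].
apply: (le_trans (E_le (@Int_f S m.+1 mS) hIs _)).
  move=> w; case: (pselect (S w)) => [Sw|nSw].
  - rewrite ind1 // mulr1.
    have [k Ck] := hcov w Sw.
    have hv := vn_le _ _ (vnorm_ge0 _ (L m.+1 w)) hd.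
    apply: (le_trans hv).
    rewrite vnorm_sq lerD2l [_ / dl]mulrC; apply: ler_wpM2l; first by rewrite invr_ge0 ltW.
    have -> : Num.max 0 (sqn (L m.+1 w) - dl ^+ 2) = \1_(Cf k) w * g w.
      by rewrite ind1 // mul1r.
    apply: (@sum_ge_term I (index_enum I) (fun k => \1_(Cf k) w * g w) k); first exact: mem_index_enum.
    by move=> j; apply: mulr_ge0; [case: (indic01 (Cf j) w) => ->|exact: gf_ge0].
  - rewrite ind0 // mulr0; apply: addr_ge0; first exact: ltW.
    apply: mulr_ge0; first by rewrite invr_ge0 ltW.
    apply: sumr_ge0 => j _; apply: mulr_ge0; last exact: gf_ge0.
    by case: (indic01 (Cf j) w) => ->.
rewrite E_D ?E_cst; [|exact: Int_cst|by apply: IntZ].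
rewrite E_Z // E_sum //.
rewrite lerD2l -mulrA; apply: ler_wpM2l; first by rewrite invr_ge0 ltW.
rewrite mulr_suml.
apply: ler_sum => k _.
have hfin : P (Cf k) \is a fin_num by exact: fin_num_measure.
rewrite /c; case: eqP => hp.
- rewrite mul0r cell_null //.
  by rewrite -(fineK hfin) hp.
- have hb := cell_bound (Cf k) dl m (mC k) (hC k).
  have pp : 0 < fine (P (Cf k)).
    by rewrite lt_def; apply/andP; split; [apply/eqP|rewrite fine_ge0 // measure_ge0].
  rewrite mulrAC ler_pdivlMr // mulrC.
  exact: hb.
Qed.

Lemma sq_le_of (a b lo h : R) : lo <= a <= lo + h -> lo <= b <= lo + h ->
  (a - b) ^+ 2 <= h ^+ 2.
Proof.
move=> /andP[a1 a2] /andP[b1 b2].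
have h1 : 0 <= h - (a - b) by lra.
have h2 : 0 <= h + (a - b) by lra.
have := mulr_ge0 h1 h2.
rewrite !expr2; lra.
Qed.

Lemma cells (M dl : R) : 0 < M -> 0 < dl ->
  exists K : nat, exists Cf : {ffun 'I_(N 0) -> 'I_K.+1} -> set T,
  (forall k, measurable (Cf k)) /\
  (forall k w w', Cf k w -> Cf k w' -> sqn (X w - X w') <= dl ^+ 2) /\
  (forall w, vnorm (X w) <= M -> exists k, Cf k w).
Proof.
move=> hM hd.
set n0 := N 0.
set K := Num.trunc (2 * M * (n0.+1)%:R / dl).
set Kr : R := (K.+1)%:R.
have hKr : 2 * M * (n0.+1)%:R / dl < Kr by exact: truncnS_gt.
have Kr0 : 0 < Kr by rewrite ltr0n.
set h := 2 * M / Kr.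
have h0 : 0 < h by rewrite divr_gt0 // mulr_gt0.
have hKh : Kr * h = 2 * M by rewrite /h mulrC divfK // gt_eqF.
have hnh : (n0.+1)%:R * h <= dl.
  have a : 2 * M * (n0.+1)%:R < Kr * dl by rewrite -ltr_pdivrMr.
  rewrite /h mulrA ler_pdivrMr //.
  lra.
pose lo (k : {ffun 'I_n0 -> 'I_K.+1}) i : R := - M + (k i)%:R * h.
exists K, (fun k => [set w | forall i, lo k i <= X w i 0 <= lo k i + h]).
split; [|split].
- move=> k.
  have -> : [set w | forall i, lo k i <= X w i 0 <= lo k i + h] =
            \bigcap_(i in [set: 'I_n0]) [set w | lo k i <= X w i 0 <= lo k i + h].
    apply/seteqP; split => w /= hw.
      by move=> i _; exact: hw.
    by move=> i; exact: (hw i I).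
  apply: fin_bigcap_measurable; first exact: finite_finset.
  move=> i _.
  have := hXm i measurableT (measurable_itv (Interval (BLeft (lo k i)) (BRight (lo k i + h)))).
  rewrite setTI.
  congr measurable; apply/seteqP; split => w /=; rewrite in_itv /=; exact.
- move=> k w w' hw hw'.
  rewrite /sqn.
  apply: (le_trans (y := \sum_(i < n0) h ^+ 2)).
    apply: ler_sum => i _; rewrite mxBE.
    exact: sq_le_of (hw i) (hw' i).
  rewrite sumr_const card_ord -mulr_natl.
  have hn : (n0%:R : R) * h <= dl.
    apply: le_trans hnh; rewrite ler_pM2r // ler_nat; exact: leqnSn.
  rewrite expr2 mulrA [dl ^+ 2]expr2.
  apply: ler_pM => //; first by rewrite mulr_ge0 // ltW.
  + exact: ltW.
  + apply: le_trans hnh; rewrite -{1}[h]mul1r; apply: ler_wpM2r; [exact: ltW|by rewrite ler1n].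
- move=> w hw.
  have hx : forall i, - M <= X w i 0 <= M.
    move=> i; rewrite -ler_norml.
    have e1 : X w i 0 ^+ 2 <= M ^+ 2.
      apply: le_trans (_ : sqn (X w) <= _).
        rewrite /sqn (bigD1 i) //= lerDl; apply: sumr_ge0 => j _; exact: sqr_ge0.
      rewrite -vnorm_sq !expr2; apply: ler_pM => //; exact: vnorm_ge0.
    rewrite -real_normK ?num_real // in e1.
    rewrite leNgt; apply/negP => hlt.
    have : M * M < `|X w i 0| * `|X w i 0| by apply: ltr_pM => //; exact: ltW.
    rewrite !expr2 in e1; lra.
  pose t i := (X w i 0 + M) / h.
  pose kn i := minn (Num.trunc (t i)) K.
  exists [ffun i => inord (kn i)].
  move=> i /=; rewrite /lo ffunE inordK; last by rewrite ltnS geq_minr.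
  have ht0 : 0 <= t i.
    rewrite /t; apply: divr_ge0; last exact: ltW.
    by case/andP: (hx i) => ? ?; lra.
  have htK : t i <= Kr.
    rewrite /t ler_pdivrMr // hKh; case/andP: (hx i) => ? ?; lra.
  have htE : t i * h = X w i 0 + M by rewrite /t divfK // gt_eqF.
  have [k1 k2] : (kn i)%:R <= t i /\ t i <= (kn i)%:R + 1.
    rewrite /kn; case: (leqP (Num.trunc (t i)) K) => hk.
    + have /andP[u1 u2] := truncn_itv ht0.
      by split => //; rewrite natr1; exact: ltW.
    + split.
      * apply: (le_trans (y := (Num.trunc (t i))%:R)); first by rewrite ler_nat ltnW.
        by rewrite truncn_le.
      * by rewrite natr1.
  have k1' := ler_wpM2r (ltW h0) k1.
  have k2' := ler_wpM2r (ltW h0) k2.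
  rewrite mulrDl mul1r htE in k2'.
  rewrite htE in k1'.
  apply/andP; split; lra.
Qed.

End main.

Theorem mainTheorem2 (d : measure_display) (T : measurableType d) (R : realType)
  (P : probability T R) (N : nat -> nat)
  (A B : forall m, 'M[R]_(N m.+1, N m))
  (X : T -> 'cV[R]_(N 0)) :
  (forall m, (0 < N m)%N) ->
  (forall m, isometry_cplx (A m) (B m)) ->
  (forall i, measurable_fun setT (fun w => X w i 0)) ->
  (expectation P (fun w => (vnorm (X w) ^+ 2)%R) < +oo)%E ->
  forall M : R, 0 < M ->
  (fun m : nat =>
      expectation P (fun w => vnorm (layer P A B X m w) *
                              \1_[set w | vnorm (X w) <= M] w))
     @ \oo --> 0%E.
Proof.
move=> hN iso hXm hE M hM.
have hXI : Int P (fun w => sqn (X w)).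
  apply/integrableP; split; first by apply/measurable_EFinP; exact: mf_sqn.
  move: hE; rewrite expectation.unlock.
  have -> : (fun x => `|(EFin \o (fun w => sqn (X w))) x|%E) =
            (fun w => (vnorm (X w) ^+ 2)%:E).
    apply/funext => w /=; rewrite vnorm_sq ger0_norm //; exact: sqn_ge0.
  by [].
set S := [set w | vnorm (X w) <= M].
have mS : measurable S.
  have mv : mf (fun w => vnorm (X w)).
    apply: (measurableT_comp (continuous_measurable_fun (@sqrt_continuous R))).
    exact: mf_sqn.
  have := mv measurableT _ (measurable_itv (Interval -oo%O (BRight M))).
  rewrite setTI /S.
  congr measurable; apply/seteqP; split => w /=; rewrite in_itv /=; exact.
have hInt m := Int_f N A B X iso hXm hXI S m mS.
apply/fine_cvgP; split.
  by apply: nearW => m; rewrite expectationE.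
have -> : (fine \o (fun m => expectation P (fun w => vnorm (layer P A B X m w) * \1_S w))) =
          (fun m => Rintegral P setT (fun w => vnorm (layer P A B X m w) * \1_S w)).
  by apply/funext => m /=; rewrite expectationE.
apply/cvgrPdist_le => eps heps.
set dl := eps / 2.
have hdl : 0 < dl by rewrite divr_gt0.
have [K [Cf [mC [hC hcov]]]] := cells N X hXm M dl hM hdl.
have [Kc [hKc hb]] := bound_m N A B X iso hXm hXI S _ Cf dl mS hdl mC hC hcov.
have heta : 0 < dl / (Kc + 1) by rewrite divr_gt0 // ltr_pwDr.
have hs := mu_small N A B X iso hXm hXI _ heta.
have hpos : \forall m \near \oo, (0 < m)%N by exists 1%N.
near=> m0.
have hm : (0 < m0)%N by near: m0; exact: hpos.
have hsm0 : sqn (Evec P (layer P A B X m0)) <= dl / (Kc + 1) by near: m0; exact: hs.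
have [m em] : exists m, m0 = m.+1 by exists m0.-1; rewrite prednK.
rewrite em in hsm0 *.
have hsm := hsm0.
have hr0 : 0 <= Rintegral P setT (fun w => vnorm (layer P A B X m.+1 w) * \1_S w).
  apply: E_ge0 => w; apply: mulr_ge0; first exact: vnorm_ge0.
  by case: (indic01 T R S w) => ->.
rewrite sub0r normrN ger0_norm //.
apply: (le_trans (hb m)).
have : Kc * sqn (Evec P (layer P A B X m.+1)) <= Kc * (dl / (Kc + 1)).
  by apply: ler_wpM2l.
have : Kc * (dl / (Kc + 1)) <= dl.
  rewrite mulrA ler_pdivrMr ?ltr_pwDr //; nra.
rewrite /dl; lra.
Unshelve. all: by end_near.
Qed.
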